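(* Let $G$ be a finite group and $\pi$ a set of primes. For $q\in\pi$, let $\mathcal{S}_q(G_\pi)$ denote the union of all conjugacy classes $g^G$ with $g$ a $\pi$-element of $G$ such that $|g^G|$ is a power of $q$ (including $q^0=1$). Then for every $q\in\pi$, $$|\mathcal{S}_q(G_\pi)|_q=|\mathbf{Z}_\infty(G)|_q.$$ In particular, for $q\in\pi$, a Sylow $q$-subgroup of $G$ is hypercentral (i.e. contained in $\mathbf{Z}_\infty(G)$) if and only if $|G|_q=|\mathcal{S}_q(G_\pi)|_q$.
   Context: A $\pi$-element is an element whose order is divisible only by primes in $\pi$. For a positive integer $n$ and prime $q$, $n_q$ denotes the largest power of $q$ dividing $n$. $|g^G|=|G:C_G(g)|$. The hypercentre $\mathbf{Z}_\infty(G)$ is the last term of the upper central series $1\le\mathbf{Z}_1(G)\le\mathbf{Z}_2(G)\le\cdots$, with $\mathbf{Z}_1(G)=\mathbf{Z}(G)$ and $\mathbf{Z}_{i+1}(G)/\mathbf{Z}_i(G)=\mathbf{Z}(G/\mathbf{Z}_i(G))$. *)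

(* Defs.v *)
From mathcomp Require Import all_boot all_order all_fingroup all_solvable.
Set Implicit Arguments. Unset Strict Implicit. Unset Printing Implicit Defensive.
Local Open Scope group_scope.

(* Hypercentre Z_oo(G): the terminal term of the upper central series.
   The series 'Z_0(G) <= 'Z_1(G) <= ... strictly increases until it
   stabilises, so it is stationary from step #|G| on. *)
Definition hypercenter (gT : finGroupType) (G : {set gT}) : {set gT} :=
  'Z_#|G|(G).

Definition Sq_pi (gT : finGroupType) (G : {set gT}) (pi : nat_pred) (q : nat)
  : {set gT} :=
  [set x in G | pi.-elt x && q.-nat #|x ^: G|].

(* Main.v *)
Require Import Defs.
From mathcomp Require Import all_boot all_order all_fingroup all_solvable.
Set Implicit Arguments. Unset Strict Implicit. Unset Printing Implicit Defensive.
Local Open Scope group_scope.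
Lemma ucn_fix (gT : finGroupType) (G : {group gT}) k j :
  'Z_k(G) = 'Z_k.+1(G) -> 'Z_(j + k)(G) = 'Z_k(G).
Proof.
move=> E; elim: j => [|j IH] //.
rewrite addSn ucnSn IH -ucnSn; done.
Qed.

Lemma ucn_grow (gT : finGroupType) (G : {group gT}) k :
  k < #|'Z_k(G)| \/ exists2 i, i < k & 'Z_i(G) = 'Z_i.+1(G).
Proof.
elim: k => [|k [lt|[i lti E]]]; first by left; rewrite ucn0 cards1.
- have [E|ne] := eqVneq 'Z_k(G) 'Z_k.+1(G); first by right; exists k.
  left; apply: leq_ltn_trans lt _; apply: proper_card.
  by rewrite properEneq ne ucn_subS.
- by right; exists i => //; apply: ltnW.
Qed.

Lemma ucn_stab (gT : finGroupType) (G : {group gT}) m :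
  #|G| <= m -> 'Z_m(G) = 'Z_#|G|(G).
Proof.
move=> le.
have [lt|[i lti E]] := ucn_grow G #|G|.
  by have := subset_leq_card (ucn_sub #|G| G); rewrite leqNgt lt.
rewrite -(subnK (leq_trans (ltnW lti) le)) ucn_fix //.
by rewrite -(subnK (ltnW lti)) ucn_fix.
Qed.
Lemma ucn_meet_center (gT : finGroupType) (G : {group gT}) k :
  forall H : {group gT}, H <| G -> H \subset 'Z_k(G) -> H :!=: 1 ->
  H :&: 'Z(G) != 1.
Proof.
elim: k => [|k IH] H nHG sHZ ntH.
  by move: sHZ; rewrite ucn0 subG1 (negPf ntH).
have [/commG1P cHG | ntK] := eqVneq [~: H, G] 1.
  have sHZ1 : H \subset 'Z(G).
    by apply/subsetIP; split; rewrite ?(normal_sub nHG) // centsC.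
  by rewrite (setIidPl sHZ1).
have nKG : [~: H, G] <| G.
  apply/andP; split; first by rewrite commg_subr (subset_trans (normal_sub nHG) (normG G)).
  exact: normsR (normal_norm nHG) (normG G).
have sKH : [~: H, G] \subset H by rewrite commg_subl (normal_norm nHG).
have sKZ : [~: H, G] \subset 'Z_k(G).
  exact: subset_trans (commSg _ sHZ) (ucn_comm k G).
apply: contraNneq (IH [~: H, G]%G nKG sKZ ntK) => E.
by rewrite -subG1 -E setSI.
Qed.

Lemma central_comm_q'elt (gT : finGroupType) (G N : {group gT}) q x y :
  N \subset 'Z(G) -> q.-group N -> x \in G -> y \in G ->
  [~ x, y] \in N -> q^'.-elt y -> commute x y.
Proof.
move=> sNZ qN Gx Gy Nn qy.
set n := [~ x, y] in Nn.
have Zn : n \in 'Z(G) by apply: (subsetP sNZ).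
have cn : forall k g, g \in G -> (n ^+ k) ^ g = n ^+ k.
  move=> k g Gg; apply/conjg_fixP/commgP.
  have cg : commute n g by case/centerP: Zn => _ /(_ g Gg).
  by have := commuteX2 k 1 cg; rewrite expg1.
have xy : x ^ y = x * n by rewrite /n mulKVg.
have E : forall k, x ^ (y ^+ k) = x * n ^+ k.
  elim=> [|k IHk]; first by rewrite conjg1 mulg1.
  by rewrite expgSr conjgM IHk conjMg cn // xy -mulgA -expgS.
have n1 : n ^+ #[y] = 1.
  by apply: (mulgI x); rewrite -E expg_order conjg1 mulg1.
have on1 : #[n] = 1%N.
  apply: (pnat_1 (mem_p_elt qN Nn)).
  by apply: pnat_dvd qy; rewrite order_dvdn n1.
by apply/commgP; rewrite -order_eq1 on1.
Qed.
Lemma card_cosetpre_set (gT : finGroupType) (H : {group gT}) (A : {set coset_of H}) :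
  #|coset H @*^-1 A| = (#|H| * #|A|)%N.
Proof.
rewrite -sum1_card.
rewrite (partition_big (coset H) (fun a => a \in A)) /=; last first.
  by move=> x /morphpreP[].
rewrite mulnC -sum_nat_const; apply: eq_bigr => a Aa.
rewrite sum1dep_card.
have -> : [set x | (x \in coset H @*^-1 A) && (coset H x == a)] = coset H @*^-1 [set a].
  apply/setP=> x; rewrite !inE.
  case: (_ \subset _) => //=.
  by case: (coset_morphism H x =P a) => [->|_]; rewrite ?Aa ?andbF.
rewrite (cosetpre_set1_coset a).
have [x Nx ->] := cosetP a.
by rewrite val_coset // card_rcoset.
Qed.

Lemma pelt_quo (gT : finGroupType) (N : {group gT}) (pi : nat_pred) q x :
  q \in pi -> q.-group N -> x \in 'N(N) -> pi.-elt (coset N x) -> pi.-elt x.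
Proof.
move=> qpi qN Nx pix.
set m := #[coset N x].
have xm : x ^+ m \in N.
  apply: coset_idr; first by rewrite groupX.
  by rewrite morphX // expg_order.
have qxm : pi.-nat #[x ^+ m].
  apply: sub_in_pnat (mem_p_elt qN xm) => p _; rewrite inE => /eqP->; done.
rewrite /p_elt; have -> : #[x] = (#[x ^+ m] * gcdn #[x] m)%N by rewrite orderXgcd divnK ?dvdn_gcdl.
rewrite pnatM qxm /=; apply: pnat_dvd pix; exact: dvdn_gcdr.
Qed.

Lemma class_quo (gT : finGroupType) (G N : {group gT}) q x :
  prime q -> N \subset 'Z(G) -> q.-group N -> x \in G ->
  q.-nat #|x ^: G| = q.-nat #|coset N x ^: (G / N)|.
Proof.
move=> qpr sNZ qN Gx.
have sNG : N \subset G by apply: subset_trans sNZ (center_sub G).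
have nNG : G \subset 'N(N).
  apply: subset_trans (cent_sub N); rewrite centsC.
  by apply: subset_trans sNZ _; rewrite subsetIr.
have nsNG : N <| G by rewrite /normal sNG nNG.
have Nx : x \in 'N(N) by apply: (subsetP nNG).
set Cb := 'C_(G / N)[coset N x].
set D := coset N @*^-1 Cb.
have sDG : D \subset G.
  by rewrite -(quotientGK nsNG); apply: morphpreS; apply: subsetIl.
have sCD : 'C_G[x] \subset D.
  apply/subsetP=> y /setIP[Gy cxy]; have Ny := subsetP nNG y Gy.
  rewrite mem_morphpre //= inE mem_quotient //=.
  apply/cent1P; move/cent1P: cxy => cxy.
  by rewrite /commute -!morphM // cxy.
have sNCb : Cb \subset coset N @* 'N(N).
  by apply: subset_trans (subsetIl _ _) _; apply: morphimS.
have iGD : #|G : D| = #|G / N : Cb|.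
  rewrite -(index_quotient_eq (H := N) _ sDG nNG); last first.
    by apply: subIset; rewrite sub_cosetpre orbT.
  by rewrite /D /quotient morphpreK.
have qDC : q.-nat #|D : 'C_G[x]|.
  apply/(pnatP _ (indexg_gt0 _ _)) => p ppr pdv.
  rewrite inE; apply/negP => /negP npq.
  have [P sylP] := Sylow_exists p D.
  case/and3P: sylP => sPD pP p'idx.
  have sPC : P \subset 'C_G[x].
    apply/subsetP=> y Py; have Dy := subsetP sPD y Py.
    have Gy := subsetP sDG y Dy; have Ny := subsetP nNG y Gy.
    rewrite inE Gy /=; apply/cent1P; apply: commute_sym.
    apply: (central_comm_q'elt sNZ qN Gx Gy).
      apply: coset_idr; first by rewrite groupR.
      rewrite morphR //; apply/eqP; apply/commgP.
      case/morphpreP: Dy => _ /setIP[_ /cent1P c].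
      by apply: commute_sym.
    by apply: sub_in_pnat (mem_p_elt pP Py) => r _; rewrite !inE => /eqP->.
  move: p'idx; rewrite -(Lagrange_index sCD sPC) p'natE // Euclid_dvdM //.
  by rewrite pdv.
rewrite -!index_cent1 -iGD -(Lagrange_index sDG sCD) pnatM qDC andbT.
done.
Qed.

Lemma ucn_pre (gT : finGroupType) (G N : {group gT}) k :
  N \subset 'Z(G) -> coset N @*^-1 'Z_k(G / N) \subset 'Z_k.+1(G).
Proof.
move=> sNZ.
have sNG : N \subset G by apply: subset_trans sNZ (center_sub G).
have nNG : G \subset 'N(N).
  apply: subset_trans (cent_sub N); rewrite centsC.
  by apply: subset_trans sNZ _; rewrite subsetIr.
have nsNG : N <| G by rewrite /normal sNG nNG.
elim: k => [|k IH].
  by rewrite ucn0 cosetpre1 ucn1.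
apply/subsetP=> x /morphpreP[Nx].
rewrite (ucnSnR k (G / N)%G) inE => /andP[Gx' sub].
have Gx : x \in G by rewrite -(quotientGK nsNG) mem_morphpre.
rewrite ucnSnR inE Gx /=.
rewrite /commg_set gen_subG; apply/subsetP=> _ /imset2P[a g /set1P-> Gg ->].
apply: (subsetP IH); have Ng := subsetP nNG g Gg.
rewrite mem_morphpre ?groupR // morphR //.
apply: (subsetP sub); apply: mem_commg; first by rewrite set11.
exact: mem_quotient.
Qed.

Lemma hyper_pre (gT : finGroupType) (G N : {group gT}) :
  N \subset 'Z(G) -> N :!=: 1 ->
  coset N @*^-1 hypercenter (G / N)%G = hypercenter G.
Proof.
move=> sNZ ntN.
have sNG : N \subset G by apply: subset_trans sNZ (center_sub G).
have nNG : G \subset 'N(N).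
  apply: subset_trans (cent_sub N); rewrite centsC.
  by apply: subset_trans sNZ _; rewrite subsetIr.
rewrite /hypercenter; apply/eqP; rewrite eqEsubset; apply/andP; split.
  apply: subset_trans (ucn_pre _ sNZ) _; apply: ucn_sub_geq.
  exact: ltn_quotient.
apply/subsetP=> x Zx.
have Gx : x \in G := subsetP (ucn_sub _ _) x Zx.
have Nx := subsetP nNG x Gx.
rewrite mem_morphpre //.
have := morphim_ucn #|G| G (coset_morphism N).
rewrite -(ucn_stab (G := (G / N)%G) (leq_quotient _ _)) => /subsetP; apply.
exact: mem_morphim.
Qed.

Lemma Sq_pre (gT : finGroupType) (G N : {group gT}) (pi : nat_pred) q :
  prime q -> q \in pi -> N \subset 'Z(G) -> q.-group N ->
  coset N @*^-1 Sq_pi (G / N)%G pi q = Sq_pi G pi q.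
Proof.
move=> qpr qpi sNZ qN.
have sNG : N \subset G by apply: subset_trans sNZ (center_sub G).
have nNG : G \subset 'N(N).
  apply: subset_trans (cent_sub N); rewrite centsC.
  by apply: subset_trans sNZ _; rewrite subsetIr.
have nsNG : N <| G by rewrite /normal sNG nNG.
apply/setP=> x.
have [Nx|nNx] := boolP (x \in 'N(N)); last first.
  have nGx : x \notin G by apply: contra nNx; apply: (subsetP nNG).
  apply/idP/idP => [/morphpreP[]|]; first by rewrite (negPf nNx).
  by rewrite inE (negPf nGx).
have -> : (x \in coset N @*^-1 Sq_pi (G / N)%G pi q) = (coset N x \in Sq_pi (G / N)%G pi q).
  by apply/idP/idP => [/morphpreP[] //|]; apply: mem_morphpre.
rewrite /Sq_pi !inE.
have -> : (coset N x \in (G / N)%G) = (x \in G).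
  apply/idP/idP => [h|Gx]; last exact: mem_quotient.
  by rewrite -(quotientGK nsNG); apply: mem_morphpre.
case Gx: (x \in G) => //=.
rewrite -class_quo //.
congr (_ && _); apply/idP/idP; last exact: morph_p_elt.
exact: pelt_quo qpi qN Nx.
Qed.

Lemma Sq_norm (gT : finGroupType) (G : {group gT}) (pi : nat_pred) q :
  G \subset 'N(Sq_pi G pi q).
Proof.
apply/subsetP=> g Gg; rewrite inE; apply/subsetP=> _ /imsetP[x Sx ->].
move: Sx; rewrite /Sq_pi !inE => /and3P[Gx px qx].
by rewrite groupJ // p_eltJ px classGidl.
Qed.

Lemma Sq1 (gT : finGroupType) (G : {group gT}) (pi : nat_pred) q :
  (1 : gT) \in Sq_pi G pi q.
Proof. by rewrite /Sq_pi !inE group1 p_elt1 class1G cards1. Qed.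

Lemma base_S (gT : finGroupType) (G : {group gT}) (pi : nat_pred) q :
  prime q -> q \in pi -> ~~ (q %| #|'Z(G)|) -> ~~ (q %| #|Sq_pi G pi q|).
Proof.
move=> qpr qpi nqZ.
have [P sylP] := Sylow_exists q G.
have /and3P[sPG qP q'idx] := sylP.
have actP : [acts P, on Sq_pi G pi q | 'J].
  by rewrite astabsJ; apply: subset_trans sPG (Sq_norm G pi q).
have E := pgroup_fix_mod qP actP.
have HallO := nilpotent_pcore_Hall pi (abelian_nil (center_abelian G)).
have nO := pcore_normal pi 'Z(G).
have fixE : 'Fix_(Sq_pi G pi q | 'J)(P) = 'O_pi('Z(G)).
  rewrite afixJ; apply/setP=> x; rewrite inE.
  apply/andP/idP => [[Sx cPx]|Ox].
    move: Sx; rewrite /Sq_pi !inE => /and3P[Gx px qx].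
    have sPC : P \subset 'C_G[x] by rewrite subsetI sPG sub_cent1.
    have q'x : q^'.-nat #|x ^: G|.
      rewrite -index_cent1; apply: pnat_dvd q'idx.
      by rewrite -(Lagrange_index (subsetIl G 'C[x]) sPC) dvdn_mulr.
    have CG := index1g (subsetIl G 'C[x]) (etrans (index_cent1 G x) (pnat_1 qx q'x)).
    have Zx : x \in 'Z(G).
      by rewrite inE Gx -sub_cent1 -CG subsetIr.
    by rewrite (mem_normal_Hall HallO nO Zx).
  have Zx : x \in 'Z(G) := subsetP (pcore_sub _ _) x Ox.
  have px : pi.-elt x by rewrite -(mem_normal_Hall HallO nO Zx).
  move: Zx; rewrite inE => /andP[Gx cGx].
  have sGC : G \subset 'C[x] by rewrite sub_cent1.
  split; last by rewrite -sub_cent1 (subset_trans sPG sGC).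
  rewrite /Sq_pi !inE Gx px -index_cent1 (setIidPl sGC) indexgg.
  done.
have nqO : ~~ (q %| #|'O_pi('Z(G))|).
  by apply: contra nqZ => h; apply: dvdn_trans h (cardSg (pcore_sub _ _)).
by move: nqO; rewrite /dvdn E fixE.
Qed.

Lemma base_Z (gT : finGroupType) (G : {group gT}) q :
  prime q -> ~~ (q %| #|'Z(G)|) -> ~~ (q %| #|hypercenter G|).
Proof.
move=> qpr nqZ; apply/negP => qdv.
have [y Zy oy] := Cauchy qpr qdv.
set Z := 'Z_#|G|(G).
have HallQ := nilpotent_pcore_Hall q (ucn_nilpotent #|G| G).
have nQ := pcore_normal q [group of Z].
have Qy : y \in 'O_q(Z) by rewrite (mem_normal_Hall HallQ nQ Zy) /p_elt oy pnat_id.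
have nQG : 'O_q(Z) <| G := char_normal_trans (pcore_char q _) (ucn_normal _ _).
have ntQ : 'O_q(Z) :!=: 1.
  apply/trivgPn; exists y => //; apply/eqP => y1.
  by move: oy; rewrite y1 order1 => q1; rewrite -q1 in qpr.
have := ucn_meet_center nQG (pcore_sub _ _) ntQ.
have qI : q.-group ('O_q(Z) :&: 'Z(G)) := pgroupS (subsetIl _ _) (pcore_pgroup _ _).
move/(pgroup_pdiv qI) => [_ qdvI _].
by move: nqZ; rewrite (dvdn_trans qdvI (cardSg (subsetIr _ _))).
Qed.

Lemma main_count (pi : nat_pred) q n :
  prime q -> q \in pi ->
  forall (gT : finGroupType) (G : {group gT}), #|G| <= n ->
  (#|Sq_pi G pi q|`_q = #|hypercenter G|`_q)%N.
Proof.
move=> qpr qpi; elim: n => [|n IH] gT G leG.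
  by move: (cardG_gt0 G); rewrite leqNgt ltnS leqn0 => /negP; case; apply/eqP; move: leG; rewrite leqn0 => /eqP->.
have [qZ|nqZ] := boolP (q %| #|'Z(G)|); last first.
  rewrite !part_p'nat // p'natE //.
    exact: base_Z.
  exact: base_S.
have [z Zz oz] := Cauchy qpr qZ.
set N := <[z]>%G.
have sNZ : N \subset 'Z(G) by rewrite cycle_subG.
have qN : q.-group N by rewrite /pgroup -orderE oz pnat_id.
have ntN : N :!=: 1.
  rewrite cycle_eq1; apply/eqP => z1.
  by move: oz; rewrite z1 order1 => q1; rewrite -q1 in qpr.
have sNG : N \subset G by apply: subset_trans sNZ (center_sub G).
have ltG : #|(G / N)%G| <= n.
  by rewrite -ltnS; apply: leq_trans leG; apply: ltn_quotient.
have IHq := IH _ (G / N)%G ltG.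
rewrite -(@Sq_pre _ G N pi q qpr qpi sNZ qN) card_cosetpre_set.
rewrite -(hyper_pre sNZ ntN) card_cosetpre_set.
rewrite !partnM ?cardG_gt0 ?IHq //.
by apply/card_gt0P; exists 1; apply: Sq1.
Qed.

Theorem theorem3p1 (gT : finGroupType) (G : {group gT}) (pi : nat_pred)
  (pi_primes : forall p, p \in pi -> prime p) (q : nat) (q_pi : q \in pi) :
  (#|Sq_pi G pi q|`_q = #|hypercenter G|`_q)%N /\
  (forall P : {group gT}, P \in 'Syl_q(G) ->
     (P \subset hypercenter G) <-> (#|G|`_q = #|Sq_pi G pi q|`_q)%N).
Proof.
have qpr := pi_primes q q_pi.
have E := main_count qpr q_pi (leqnn #|G|).
split=> // P; rewrite inE => sylP; rewrite E /hypercenter.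
have sZG := ucn_sub #|G| G.
split=> [sPZ|eq].
  by rewrite -(card_Hall sylP) (card_Hall (pHall_subl sPZ sZG sylP)).
have HallO := nilpotent_pcore_Hall q (ucn_nilpotent #|G| G).
have nOG : 'O_q('Z_#|G|(G)) <| G := char_normal_trans (pcore_char q _) (ucn_normal _ _).
have HallOG : q.-Hall(G) 'O_q('Z_#|G|(G)).
  rewrite pHallE (subset_trans (pcore_sub _ _) sZG) /= (card_Hall HallO) eq.
  by [].
have /and3P[sPG qP _] := sylP.
apply: subset_trans (pcore_sub q _).
by rewrite (sub_normal_Hall HallOG nOG sPG).
Qed.
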